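(* Let $p$ be a prime and let $G$ be a finite Abelian $p$-group. Let $S$ be a sequence over $G$ with $|S|=\mathsf{D}(G)+i-1$, where $i\in\{1,2,\dots,p\}$, and let $\mathcal{A}$ be any subset of $\{1,2,\dots,p-1\}$ with exactly $i-1$ elements. Then $S$ contains a non-empty zero-sum subsequence $S'$ such that $|S'|\not\equiv b \pmod p$ for all $b\in\mathcal{A}$.
   Context: A sequence over a finite Abelian group $G$ (written additively) is a finite multiset of elements of $G$; its length $|S|$ is the number of terms counted with multiplicity, and a subsequence is a sub-multiset. A zero-sum sequence is one whose terms sum to $0$. The Davenport constant $\mathsf{D}(G)$ is the smallest positive integer $t$ such that every sequence over $G$ of length at least $t$ contains a non-empty zero-sum subsequence. *)

(* Defs.v *)
From mathcomp Require Import all_boot all_order all_algebra.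
Set Implicit Arguments. Unset Strict Implicit. Unset Printing Implicit Defensive.
Import GRing.Theory.
Local Open Scope ring_scope.

(* A sequence over G is a [seq G]; a subsequence (sub-multiset) is given by a
   set I of positions; its length is #|I| and its sum \sum_(k in I) S`_k. *)

Definition has_nonempty_zs (G : zmodType) (S : seq G) : Prop :=
  exists I : {set 'I_(size S)}, I != set0 /\ \sum_(k in I) S`_k = 0.

Definition davenport_constant (G : finZmodType) (D : nat) : Prop :=
  [/\ (0 < D)%N,
      (forall S : seq G, (D <= size S)%N -> has_nonempty_zs S) &
      (forall t : nat, (0 < t)%N ->
         (forall S : seq G, (t <= size S)%N -> has_nonempty_zs S) -> (D <= t)%N)].

(* Main.v *)
Require Import Defs.
From mathcomp Require Import all_boot all_order all_algebra.
Import GRing.Theory.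
Local Open Scope ring_scope.
From HB Require Import structures.
From mathcomp Require Import all_fingroup all_solvable.
From mathcomp Require Import zify ring.
Set Implicit Arguments. Unset Strict Implicit. Unset Printing Implicit Defensive.

Section GR.
Variables (G : finZmodType) (F : comNzRingType).
Definition gring := {ffun G -> F}.
HB.instance Definition _ := GRing.Zmodule.on gring.

Definition gmul (f g : gring) : gring := [ffun x => \sum_y f y * g (x - y)].
Definition gone : gring := [ffun x => (x == 0)%:R].

Lemma gmulC : commutative gmul.
Proof.
move=> f g; apply/ffunP=> x; rewrite !ffunE.
rewrite (reindex_inj (can_inj (subKr x))) /=.
by apply: eq_bigr => y _; rewrite subKr mulrC.
Qed.

Lemma gmulA : associative gmul.
Proof.
move=> f g h; apply/ffunP=> x; rewrite !ffunE.
under eq_bigr => y _ do rewrite ffunE big_distrr /=.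
under [RHS]eq_bigr => w _ do rewrite ffunE big_distrl /=.
rewrite [RHS]exchange_big /=; apply: eq_bigr => y _.
rewrite [RHS](reindex_inj (addrI y)) /=; apply: eq_bigr => z _.
by rewrite mulrA [y + z]addrC addrK opprD addrA (addrAC x).
Qed.

Lemma gmul1 : left_id gone gmul.
Proof.
move=> f; apply/ffunP=> x; rewrite ffunE (bigD1 0) //= ffunE eqxx mul1r subr0.
rewrite big1 ?addr0 // => y /negbTE ny; by rewrite ffunE ny mul0r.
Qed.

Lemma gmulDl : left_distributive gmul +%R.
Proof.
move=> f g h; apply/ffunP=> x; rewrite !ffunE -big_split /=.
by apply: eq_bigr => y _; rewrite ffunE mulrDl.
Qed.

Lemma gone_neq0 : gone != 0.
Proof. by apply/eqP => /ffunP /(_ 0); rewrite !ffunE eqxx; apply/eqP; exact: oner_neq0. Qed.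

HB.instance Definition _ := GRing.Zmodule_isComNzRing.Build gring gmulA gmulC gmul1 gmulDl gone_neq0.

Definition X (g : G) : gring := [ffun x => (x == g)%:R].

Lemma gringE (f g : gring) x : (f * g) x = \sum_y f y * g (x - y).
Proof. by rewrite ffunE. Qed.
Lemma X0 : X 0 = 1.
Proof. apply/ffunP=> x; by rewrite !ffunE. Qed.
Lemma XD a b : X (a + b) = X a * X b.
Proof.
apply/ffunP=> x; rewrite gringE (bigD1 a) //=.
rewrite /X !ffunE eqxx mul1r big1 ?addr0.
- by rewrite subr_eq [b + a]addrC.
- move=> y /negbTE ny; by rewrite ffunE ny mul0r.
Qed.
End GR.

Lemma basis_ex (G : finZmodType) : exists r (x : 'I_r -> G),
  (forall g : G, exists c : 'I_r -> nat, g = \sum_j x j *+ c j) /\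
  (forall c : 'I_r -> nat, (forall j, c j < #[x j]%g)%N -> \sum_j x j *+ c j = 0 -> forall j, c j = 0%N).
Proof.
have [b defG _] := abelian_structure (FinRing.zmod_abelian [set: G]).
rewrite (big_nth 0) big_mkord in defG.
exists (size b), (fun j => b`_j); split.
- move=> g; have [c [cP gE _]] := mem_bigdprod defG (in_setT g).
  exists (fun j => sval (cyclePmin (cP j isT))); rewrite gE.
  apply: eq_bigr => j _; by case: (cyclePmin _).
- move=> c cP s0 j.
  have [c0 [_ _ uniq]] := mem_bigdprod defG (in_setT 0).
  have e1 := uniq (fun j => b`_j *+ c j) (fun j _ => mem_cycle _ _) (esym s0) j isT.
  have := uniq (fun j => 1%g) (fun j _ => group1 _); rewrite big1_eq => /(_ erefl j isT) e2.
  have : (b`_j ^+ c j == 1)%g by apply/eqP; rewrite FinRing.zmodXgE e1 e2.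
  rewrite -order_dvdn => /dvdn_leq; have := cP j; case: (c j) => // n.
  by move=> h /(_ isT); rewrite leqNgt h.
Qed.

Section Olson.
Variables (p : nat) (G : finZmodType).
Hypotheses (pr_p : prime p) (pG : p.-nat #|G|).
Local Notation R := (gring G 'F_p).
Local Notation X := (@X G 'F_p).

Lemma pcharR : p \in [pchar R].
Proof.
rewrite inE pr_p /=; apply/eqP/ffunP => x; rewrite ffunMnE.
by rewrite (mulrn_pchar (pchar_Fp pr_p)) ffunE.
Qed.

Lemma XMn x n : X (x *+ n) = X x ^+ n.
Proof. by elim: n => [|n IH]; rewrite ?mulr0n ?X0 // mulrS exprS XD IH. Qed.

Lemma e_nil x : p.-nat #[x]%g -> (1 - X x) ^+ #[x]%g = 0.
Proof.
move=> px; have cq : [pchar R].-nat #[x]%g by rewrite (eq_pnat _ (pcharf_eq pcharR)).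
rewrite exprDn_pchar // exprNn_pchar // expr1n -XMn.
have -> : x *+ #[x]%g = 0 by rewrite -FinRing.zmodXgE expg_order.
by rewrite X0 subrr.
Qed.

Variables (r : nat) (x : 'I_r -> G).
Hypothesis B1 : forall g : G, exists c : 'I_r -> nat, g = \sum_j x j *+ c j.

Definition eb j := 1 - X (x j).
Definition inI (f : R) := exists u : 'I_r -> R, f = \sum_j u j * eb j.

Lemma inI0 : inI 0.
Proof. by exists (fun _ => 0); rewrite big1 // => j _; rewrite mul0r. Qed.
Lemma inID f g : inI f -> inI g -> inI (f + g).
Proof.
move=> [u ->] [v ->]; exists (fun j => u j + v j); rewrite -big_split.
by apply: eq_bigr => j _; rewrite mulrDl.
Qed.
Lemma inIM a f : inI f -> inI (a * f).
Proof.
move=> [u ->]; exists (fun j => a * u j); rewrite big_distrr.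
by apply: eq_bigr => j _; exact: mulrA.
Qed.
Lemma inI_eb j : inI (eb j).
Proof.
exists (fun k => (k == j)%:R); rewrite (bigD1 j) //= eqxx mul1r big1 ?addr0 //.
by move=> k /negbTE ->; rewrite mul0r.
Qed.

Lemma inI_X g : inI (1 - X g).
Proof.
have [c ->] := B1 g.
pose P h := inI (1 - X h).
have P0 : P 0 by rewrite /P X0 subrr; exact: inI0.
have PD a b : P a -> P b -> P (a + b).
  rewrite /P XD => Ha Hb.
  have -> : 1 - X a * X b = (1 - X a) + X a * (1 - X b).
    by rewrite mulrBr mulr1 addrA subrK.
  exact: inID Ha (inIM _ Hb).
apply: (big_ind P) => // j _.
elim: (c j) => [|n IH]; first by rewrite mulr0n.
by rewrite mulrS; apply: PD IH; exact: inI_eb.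
Qed.

Lemma prod_vanish (I : finType) (U : {set I}) (s : I -> G) :
  (\sum_j (#[x j]%g - 1) < #|U|)%N -> \prod_(k in U) (1 - X (s k)) = 0.
Proof.
move=> hU.
have px j : p.-nat #[x j]%g.
  by apply: pnat_dvd pG; rewrite -cardsT; apply: order_dvdG; rewrite inE.
have [k0 k0U] : exists k0, k0 \in U.
  by apply/set0Pn; rewrite -card_gt0; apply: leq_ltn_trans hU.
case: (posnP r) => [r0|r_gt0].
  rewrite (bigD1 k0) //=; have [c ->] := B1 (s k0).
  rewrite big1 ?X0 ?subrr ?mul0r // => j _; exfalso.
  by have := ltn_ord j; move: (nat_of_ord j) => m; rewrite r0.
pose j0 := Ordinal r_gt0.
have [u hu] := fin_all_exists (fun k => inI_X (s k)).
rewrite (eq_bigr (fun k => \sum_j u k j * eb j)) //.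
rewrite (big_distr_big j0) /=.
apply: big1 => f _.
rewrite big_split /=.
suff -> : \prod_(k in U) eb (f k) = 0 by rewrite mulr0.
rewrite (partition_big f predT) //=.
pose c j := #|[set k in U | f k == j]|.
have Hc j : \prod_(k | (k \in U) && (f k == j)) eb (f k) = eb j ^+ c j.
  rewrite -prodr_const; apply: eq_big => k; first by rewrite inE.
  by move=> /andP[_ /eqP->].
under eq_bigr => j _ do rewrite Hc.
have [/existsP[j hj]|] := boolP [exists j, #[x j]%g <= c j]%N.
  rewrite (bigD1 j) //= -(subnKC hj) exprD e_nil // mul0r.
  by rewrite mul0r.
rewrite negb_exists => /forallP hc; exfalso.
have cardU : #|U| = (\sum_j c j)%N.
  transitivity (\sum_(k in U) 1)%N; first by rewrite sum1_card.
  rewrite (partition_big f predT) //=; apply: eq_bigr => j _.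
  transitivity (\sum_(k in [set k in U | f k == j]) 1)%N; last by rewrite sum1_card.
  by apply: eq_bigl => k; rewrite !inE.
move: hU; rewrite cardU ltnNge => /negP; apply.
apply: leq_sum => j _; have := hc j; rewrite -ltnNge.
move: (c j) (#[x j]%g) => a b; lia.
Qed.
End Olson.

Section DavLB.
Variables (G : finZmodType) (r : nat) (x : 'I_r -> G).
Hypothesis B2 : forall c : 'I_r -> nat, (forall j, c j < #[x j]%g)%N ->
  \sum_j x j *+ c j = 0 -> forall j, c j = 0%N.

Lemma zsf_crit (S : seq G) (kap : 'I_(size S) -> 'I_r) :
  (forall k : 'I_(size S), S`_k = x (kap k)) ->
  (forall j, #|[set k | kap k == j]| < #[x j]%g)%N -> ~ has_nonempty_zs S.
Proof.
move=> Sk hf [I [I0 sI]].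
pose c j := #|[set k in I | kap k == j]|.
have eqs : \sum_(k in I) S`_k = \sum_j x j *+ c j.
  rewrite (partition_big kap predT) //=; apply: eq_bigr => j _.
  transitivity (\sum_(k in [set k in I | kap k == j]) x j); last by rewrite sumr_const.
  apply: eq_big => k; first by rewrite !inE.
  by move=> /andP[_ /eqP <-]; rewrite Sk.
have hc j : (c j < #[x j]%g)%N.
  apply: leq_ltn_trans (hf j); apply: subset_leq_card.
  by apply/subsetP => k; rewrite !inE => /andP[].
have := B2 hc; rewrite -eqs sI => /(_ erefl) c0.
have [k kI] := set0Pn _ I0.
have := c0 (kap k); rewrite /c => /eqP; rewrite cards_eq0 => /eqP/setP/(_ k).
by rewrite !inE kI eqxx.
Qed.

Lemma dav_lb D : davenport_constant G D -> (\sum_j (#[x j]%g - 1) < D)%N.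
Proof.
case=> D0 DS _.
case: (posnP r) => [r0|r_gt0].
  rewrite big1 // => j _; exfalso.
  by have := ltn_ord j; move: (nat_of_ord j) => m; rewrite r0.
pose j0 := Ordinal r_gt0.
pose L := flatten [seq nseq (#[x j]%g - 1) j | j <- enum 'I_r].
pose S := [seq x j | j <- L].
have sizeS : size S = (\sum_j (#[x j]%g - 1))%N.
  rewrite size_map size_flatten /shape -map_comp sumnE big_map big_enum /=.
  by apply: eq_bigr => j _; rewrite size_nseq.
rewrite -sizeS ltnNge; apply/negP => /DS.
apply: (zsf_crit (kap := fun k => nth j0 L k)).
- move=> k; rewrite (nth_map j0) //; rewrite -(size_map x); exact: ltn_ord.
- move=> j.
  have -> : #|[set k : 'I_(size S) | nth j0 L k == j]| = count_mem j L.
    transitivity (\sum_(k in [set k : 'I_(size S) | nth j0 L k == j]) 1)%N.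
      by rewrite sum1_card.
    rewrite (eq_bigl (fun k : 'I_(size S) => nth j0 L k == j)); last by move=> k; rewrite inE.
    rewrite -(big_mkord (fun k => nth j0 L k == j) (fun _ => 1%N)) size_map.
    by rewrite -(big_nth j0 (fun i => i == j) (fun _ => 1%N)) sum1_count.
  rewrite count_flatten -map_comp sumnE big_map big_enum /= (bigD1 j) //=.
  rewrite count_nseq /= eqxx mul1n big1 ?addn0.
    by have := order_gt0 (x j); move: (#[x j]%g) => a; lia.
  by move=> i /negbTE ni; rewrite count_nseq /= ni.
Qed.
End DavLB.

Section Ex.
Variables (G : finZmodType) (F : comNzRingType).
Local Notation R := (gring G F).
Local Notation X := (@X G F).

Lemma oppgE (f : R) h : (- f) h = - f h.
Proof. by rewrite ffunE. Qed.

Lemma signgE m (f : R) h : ((-1) ^+ m * f) h = (-1) ^+ m * f h.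
Proof.
elim: m => [|m IH].
  by rewrite expr0 mul1r expr0 mul1r.
rewrite exprS mulN1r mulNr oppgE IH.
by rewrite exprS mulN1r mulNr.
Qed.
Lemma sumgE (I : finType) (P : pred I) (f : I -> R) h : (\sum_(i | P i) f i) h = \sum_(i | P i) f i h.
Proof. exact: sum_ffunE. Qed.

Lemma prodX (I : finType) (W : {set I}) (s : I -> G) :
  \prod_(k in W) X (s k) = X (\sum_(k in W) s k).
Proof. by rewrite (big_morph X (@XD G F) (@X0 G F)). Qed.

Lemma expand (I : finType) (U : {set I}) (s : I -> G) :
  \prod_(k in U) (1 - X (s k)) =
  \sum_(W : {set I} | W \subset U) (-1) ^+ #|W| * X (\sum_(k in W) s k).
Proof.
rewrite big_mkcond /=.
have E k : (if k \in U then 1 - X (s k) else 1) = (if k \in U then - X (s k) else 0) + 1.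
  by case: ifP; rewrite ?add0r // addrC.
rewrite (eq_bigr _ (fun k _ => E k)).
rewrite (bigA_distr (R := R)).
rewrite (bigID (fun J : {set I} => J \subset U)) /=.
rewrite [Y in _ + Y]big1 ?addr0; last first.
  move=> J /subsetPn [k kJ kU]; rewrite (bigD1 k) //= kJ (negbTE kU) mul0r //.
apply: eq_bigr => J JU.
rewrite -prodX -prodrN [RHS]big_mkcond /=; apply: eq_bigr => k _.
case: ifP => // kJ; by rewrite (subsetP JU k kJ).
Qed.
End Ex.

Section Key.
Variables (p : nat) (G : finZmodType) (D : nat).
Hypotheses (pr_p : prime p) (pG : p.-nat #|G|) (dav : davenport_constant G D).

Lemma key (n : nat) (s : 'I_n -> G) (U : {set 'I_n}) h :
  (D <= #|U|)%N ->
  \sum_(W : {set 'I_n} | (W \subset U) && (\sum_(k in W) s k == h)) (-1) ^+ #|W| = 0 :> 'F_p.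
Proof.
move=> DU.
have [r [x [B1 B2]]] := basis_ex G.
have hU := leq_trans (dav_lb B2 dav) DU.
have := prod_vanish pr_p pG B1 s hU.
rewrite expand => /(congr1 (fun f : gring G 'F_p => f h)).
rewrite sumgE => E.
transitivity (\sum_(W : {set 'I_n} | W \subset U)
   ((-1) ^+ #|W| * X 'F_p (\sum_(k in W) s k)) h); last by rewrite E ffunE.
rewrite [RHS]big_mkcond [LHS]big_mkcond /=; apply: eq_bigr => W _.
case: (W \subset U) => //=.
rewrite signgE ffunE eq_sym; case: eqP => _; by rewrite ?mulr1 ?mulr0.
Qed.

Lemma sum_setU n (s : 'I_n -> G) (V W : {set 'I_n}) : [disjoint V & W] ->
  \sum_(k in V :|: W) s k = \sum_(k in V) s k + \sum_(k in W) s k.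
Proof. by move=> dVW; rewrite -bigU //; apply: eq_bigl => k; rewrite !inE. Qed.

Lemma inner (n : nat) (s : 'I_n -> G) (V : {set 'I_n}) :
  (D + #|V| <= n)%N ->
  \sum_(T : {set 'I_n} | (V \subset T) && (\sum_(k in T) s k == 0)) (-1) ^+ #|T| = 0 :> 'F_p.
Proof.
move=> hV.
rewrite (reindex_onto (fun W => V :|: W) (fun T => T :\: V)) /=; last first.
  move=> T /andP[VT _]; apply/setP => k; rewrite !inE.
  by case: (boolP (k \in V)) => //= kV; rewrite (subsetP VT).
have dE (W : {set 'I_n}) : (W :\: V == W) = (W \subset ~: V).
  by rewrite -disjoints_subset; exact: (sameP eqP setDidPl).
transitivity (\sum_(W : {set 'I_n} | (W \subset ~: V) &&
     (\sum_(k in W) s k == - \sum_(k in V) s k))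
   ((-1) ^+ #|V| * (-1) ^+ #|W| : 'F_p)).
  apply: eq_big => W.
    rewrite subsetUl /= setDUl setDv set0U dE.
    case: (boolP (W \subset ~: V)) => WV; rewrite ?andbF ?andbT //=.
    have dVW : [disjoint V & W] by rewrite disjoint_sym disjoints_subset.
    by rewrite sum_setU // addrC addr_eq0.
  rewrite setDUl setDv set0U dE => /andP[_ WV].
  have dVW : [disjoint V & W] by rewrite disjoint_sym disjoints_subset.
  rewrite -exprD; congr (_ ^+ _); apply/eqP; rewrite -(eqn_add2r #|V :&: W|) cardsUI.
  by move: dVW; rewrite -setI_eq0 => /eqP ->; rewrite cards0 addn0.
rewrite -big_distrr /= key ?mulr0 //.
have := cardsC V; rewrite card_ord; lia.
Qed.

Lemma moment (n : nat) (s : 'I_n -> G) t : (D + t <= n)%N ->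
  \sum_(T : {set 'I_n} | \sum_(k in T) s k == 0) (-1) ^+ #|T| * ('C(#|T|, t))%:R = 0 :> 'F_p.
Proof.
move=> ht.
transitivity (\sum_(T : {set 'I_n}) \sum_(V : {set 'I_n})
   (if (\sum_(k in T) s k == 0) && (V \subset T) && (#|V| == t) then (-1) ^+ #|T| else 0) : 'F_p).
  rewrite big_mkcond; apply: eq_bigr => T _.
  case: eqP => _ /=; last by rewrite big1.
  rewrite -cards_draws.
  have -> : ((#|[set A : {set 'I_n} | A \subset T & #|A| == t]|)%:R : 'F_p)
     = \sum_(V in [set A : {set 'I_n} | A \subset T & #|A| == t]) 1 by rewrite sumr_const.
  rewrite big_distrr big_mkcond; apply: eq_bigr => V _ /=.
  by rewrite !inE; case: andP => _; rewrite ?mulr1 ?mulr0.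
rewrite exchange_big /=; apply: big1 => V _.
case: (boolP (#|V| == t)) => Vt; last by apply: big1 => T _; rewrite andbF.
rewrite -[RHS](inner s (V := V)); last by rewrite (eqP Vt).
rewrite [RHS]big_mkcond; apply: eq_bigr => T _.
by rewrite andbT andbC.
Qed.

Lemma fmoment (n : nat) (s : 'I_n -> G) t : (D + t <= n)%N ->
  \sum_(T : {set 'I_n} | \sum_(k in T) s k == 0) (-1) ^+ #|T| * ((#|T| ^_ t)%N)%:R = 0 :> 'F_p.
Proof.
move=> ht; under eq_bigr => T _ do rewrite -bin_ffact natrM mulrA.
by rewrite -big_distrl /= moment // mul0r.
Qed.
End Key.

Lemma ffact_step (F : nzRingType) (c t : nat) (a : F) :
  ((c ^_ t)%N)%:R * ((c%:R : F) - a) = ((c ^_ t.+1)%N)%:R + (t%:R - a) * ((c ^_ t)%N)%:R.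
Proof.
case: (ltnP c t) => ct.
  by rewrite !ffact_small ?mulr0 ?mul0r ?addr0 // (ltn_trans ct).
rewrite ffactnSr natrM natrB // mulrBr mulrBr mulrBl.
have -> : (t%:R : F) * ((c ^_ t)%N)%:R = ((c ^_ t)%N)%:R * t%:R by rewrite -!natrM mulnC.
have -> : a * ((c ^_ t)%N)%:R = ((c ^_ t)%N)%:R * a by rewrite mulr_natr mulr_natl.
by rewrite addrA subrK.
Qed.

Lemma poly_moment (F : comNzRingType) (I : finType) (P : pred I) (w : I -> F) (c : I -> nat) m :
  (forall t, (t < m)%N -> \sum_(T | P T) w T * ((c T ^_ t)%N)%:R = 0) ->
  forall (l : seq F) t, (t + size l < m)%N ->
  \sum_(T | P T) w T * (((c T ^_ t)%N)%:R * \prod_(a <- l) ((c T)%:R - a)) = 0.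
Proof.
move=> H; elim=> [|a l IH] t /=.
  by rewrite addn0 => tm; under eq_bigr => T _ do rewrite big_nil mulr1; exact: H.
move=> tm.
have E T : w T * (((c T ^_ t)%N)%:R * \prod_(b <- a :: l) ((c T)%:R - b)) =
    w T * (((c T ^_ t.+1)%N)%:R * \prod_(b <- l) ((c T)%:R - b)) +
    (t%:R - a) * (w T * (((c T ^_ t)%N)%:R * \prod_(b <- l) ((c T)%:R - b))).
  rewrite big_cons [Z in w T * Z]mulrA ffact_step; ring.
rewrite (eq_bigr _ (fun T _ => E T)) big_split /= IH; last by move: tm; rewrite addnS addSn.
rewrite -big_distrr /= IH ?mulr0 ?addr0 //.
by move: tm; rewrite addnS; apply: ltnW.
Qed.


Unset Implicit Arguments.
Theorem theorem2p3 (p : nat) (G : finZmodType) (D i : nat) (S : seq G)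
    (A : {set 'I_p}) :
  prime p -> p.-nat #|G| ->
  davenport_constant G D ->
  (1 <= i <= p)%N ->
  size S = (D + i - 1)%N ->
  (forall b : 'I_p, b \in A -> (0 < b)%N) ->
  #|A| = (i - 1)%N ->
  exists I : {set 'I_(size S)},
    [/\ I != set0, \sum_(k in I) S`_k = 0 &
        forall b : 'I_p, b \in A -> ~ (#|I| = b %[mod p])%N].
Proof.
move=> pr_p pG dav /andP[i1 ip] sizeS Apos cardA.
set n := size S.
pose s (k : 'I_n) := S`_k.
have [/existsP[I /and3P[I0 sI hI]]|] := boolP [exists I : {set 'I_n},
  [&& I != set0, \sum_(k in I) s k == 0 & [forall b in A, (#|I| %% p != b %% p)%N]]].
  exists I; split => //; first exact/eqP.
  by move=> b bA /eqP; apply/negP; move/forallP: hI => /(_ b); rewrite bA.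
rewrite negb_exists => /forallP hno; exfalso.
pose l := [seq ((val b)%:R : 'F_p) | b <- enum A].
have sl : size l = (i - 1)%N by rewrite size_map -cardE cardA.
have H1 : forall t, (t < i)%N -> \sum_(T : {set 'I_n} | \sum_(k in T) s k == 0)
    (-1) ^+ #|T| * ((#|T| ^_ t)%N)%:R = 0 :> 'F_p.
  by move=> t ti; apply: (fmoment pr_p pG dav); rewrite /n sizeS; lia.
have := poly_moment H1 (l := l) (t := 0%N); rewrite add0n sl.
have -> : (i - 1 < i)%N by lia.
move=> /(_ isT).
apply/eqP.
have Pl (T : {set 'I_n}) : \prod_(a <- l) ((#|T|%:R : 'F_p) - a) =
    \prod_(b in A) (#|T|%:R - (val b)%:R) by rewrite big_map big_enum.
rewrite (bigD1 set0) /=; last by rewrite big_set0.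
rewrite [Y in _ + Y]big1 ?addr0; last first.
  move=> T /andP[sT T0]; have := hno T; rewrite T0 sT /= negb_forall => /existsP[b].
  rewrite negb_imply negbK => /andP[bA /eqP Tb].
  rewrite Pl (bigD1 b) //= -[(#|T|%:R : 'F_p)](Fp_nat_mod pr_p) Tb (Fp_nat_mod pr_p) subrr mul0r.
  by rewrite mulr0 mulr0.
rewrite Pl cards0 expr0 mul1r ffactn0 mul1r; apply/prodf_neq0 => b.
move=> bA; rewrite sub0r oppr_eq0; apply/eqP => h.
have := val_Fp_nat pr_p b; rewrite h /= modn_small // => b0.
by have := Apos b bA; rewrite -b0.
Qed.
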